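(* For every instance and every seller $k\in S$, $r_k\ge(1-\theta)r^\star$, where $\theta=c_{\max}/B$, $r^\star$ is the stopping rate of $\mathrm{EnvyFree}(f)$ on the cost vector $c$, and $r_k$ is the stopping rate of $\mathrm{EnvyFree}(f)$ on the cost vector obtained from $c$ by replacing $c_k$ with $0$, with $f(x)=\ln(e-x)$ for $0\le x\le e-1$ and $f(x)=0$ otherwise.
   Context: Setting: a buyer with budget $B>0$ faces a finite set $S$ of sellers; seller $i$ owns one divisible item giving utility $u_i>0$ and has cost $c_i\ge0$; $c_{\max}=\max_ic_i$. For $r>0$: $f_r(x)=f(x/r)$, $Q_r(x)=xf_r(x)+\int_x^\infty f_r(y)\,dy$, $P_{i,r}(x)=u_iQ_r(x/u_i)$. The stopping rate of $\mathrm{EnvyFree}(f)$ on a cost vector $c'$ is the value at which, decreasing $r$ from $\infty$, the nondecreasing continuous function $r\mapsto\sum_iP_{i,r}(c'_i)$ first equals $B$. *)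

(* Defs.v *)
From Stdlib Require Import Reals Lra.
From Coquelicot Require Import Coquelicot.
Open Scope R_scope.

Definition f (x : R) : R :=
  if Rle_dec 0 x then
    if Rle_dec x (exp 1 - 1) then ln (exp 1 - x) else 0
  else 0.

Definition f_r (r x : R) : R := f (x / r).

Definition int_to_infty (g : R -> R) (x : R) : R :=
  real (Lim (fun M => RInt g x M) p_infty).

Definition Q (r x : R) : R := x * f_r r x + int_to_infty (f_r r) x.

Definition P (ui r x : R) : R := ui * Q r (x / ui).

Fixpoint sumR (n : nat) (F : nat -> R) : R :=
  match n with
  | O => 0
  | S m => sumR m F + F m
  end.

(** max_{i<n} c_i (costs are nonnegative and n >= 1 in use, so starting at 0 is harmless). *)
Fixpoint cmax (n : nat) (c : nat -> R) : R :=
  match n with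
  | O => 0
  | S m => Rmax (cmax m c) (c m)
  end.

Definition total (n : nat) (u c' : nat -> R) (r : R) : R :=
  sumR n (fun i => P (u i) r (c' i)).

(** r is the stopping rate of EnvyFree(f) on cost vector c': decreasing r
    from +oo, r is the first value where the total payment equals B, i.e.
    total(r) = B and total(r') <> B for every r' > r. *)
Definition is_stopping_rate (n : nat) (u c' : nat -> R) (B r : R) : Prop :=
  0 < r /\ total n u c' r = B /\ (forall r', r < r' -> total n u c' r' <> B).

Definition zero_at (c : nat -> R) (k : nat) : nat -> R :=
  fun i => if Nat.eqb i k then 0 else c i.

(* Main.v *)
Require Import Defs.
From Stdlib Require Import Reals Lra Lia.
From Coquelicot Require Import Coquelicot.
Require Import Defs.
Open Scope R_scope.

Lemma e_gt2 : 2 < exp 1.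
Proof. pose proof (exp_ineq1 1 ltac:(lra)). lra. Qed.

Lemma f_nonneg x : 0 <= f x.
Proof.
  pose proof e_gt2. unfold f.
  destruct (Rle_dec 0 x); [destruct (Rle_dec x (exp 1 - 1))|]; try lra.
  rewrite <- ln_1. apply ln_le; lra.
Qed.

Lemma f_le1 x : f x <= 1.
Proof.
  pose proof e_gt2. unfold f.
  destruct (Rle_dec 0 x); [destruct (Rle_dec x (exp 1 - 1))|]; try lra.
  rewrite <- (ln_exp 1) at 2. apply ln_le; lra.
Qed.

Lemma f_anti a b : 0 <= a <= b -> f b <= f a.
Proof.
  intros H. pose proof e_gt2. pose proof (f_nonneg a). unfold f in *.
  destruct (Rle_dec 0 b); [|lra]. destruct (Rle_dec 0 a); [|lra].
  destruct (Rle_dec b (exp 1 - 1)); destruct (Rle_dec a (exp 1 - 1)); try lra.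
  apply ln_le; lra.
Qed.

Definition mm (z : R) := (z + (exp 1 - 1) - Rabs (z - (exp 1 - 1))) / 2.
Definition g (r y : R) := ln (exp 1 - mm (y / r)).

Lemma mm_le z : mm z <= exp 1 - 1.
Proof. unfold mm. pose proof (Rle_abs (z - (exp 1 - 1))). lra. Qed.

Lemma f_g r y : 0 < r -> 0 < y -> f_r r y = g r y.
Proof.
  intros Hr Hy. unfold f_r, g, f, mm.
  assert (0 < y / r) by (apply Rdiv_lt_0_compat; lra).
  destruct (Rle_dec 0 (y / r)); [|lra].
  destruct (Rle_dec (y / r) (exp 1 - 1)).
  - rewrite Rabs_left1 by lra. f_equal. field. lra.
  - rewrite Rabs_right by lra. replace (exp 1 - (y / r + (exp 1 - 1) - (y / r - (exp 1 - 1))) / 2) with 1 by (field; lra).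
    now rewrite ln_1.
Qed.

Lemma mm_cont r y : 0 < r -> continuity_pt (fun y => mm (y / r)) y.
Proof.
  intros Hr. unfold mm.
  apply continuity_pt_div; [| apply continuity_pt_const; intros ? ?; reflexivity | lra].
  apply continuity_pt_minus.
  - apply continuity_pt_plus. apply continuity_pt_div; [apply continuity_pt_id | apply continuity_pt_const; intros ? ?; reflexivity | lra].
    apply continuity_pt_const; intros ? ?; reflexivity.
  - apply (continuity_pt_comp (fun y => y / r - (exp 1 - 1)) Rabs).
    + apply continuity_pt_minus. apply continuity_pt_div; [apply continuity_pt_id | apply continuity_pt_const; intros ? ?; reflexivity | lra].
      apply continuity_pt_const; intros ? ?; reflexivity.
    + apply Rcontinuity_abs.
Qed.

Lemma g_cont r y : 0 < r -> continuous (g r) y.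
Proof.
  intros Hr. unfold g.
  apply (continuous_comp (fun y => mm (y / r)) (fun w => ln (exp 1 - w))).
  - pose proof (mm_cont r y Hr) as H. apply continuity_pt_filterlim in H. exact H.
  - apply (@ex_derive_continuous R_AbsRing R_NormedModule). pose proof (mm_le (y / r)). pose proof e_gt2. auto_derive. lra.
Qed.

Lemma exR r a b : 0 < r -> 0 <= a <= b -> ex_RInt (f_r r) a b.
Proof.
  intros Hr Hab.
  apply (ex_RInt_ext (g r)).
  - intros y Hy. rewrite Rmin_left in Hy by lra. symmetry. apply f_g; lra.
  - apply (@ex_RInt_continuous R_CompleteNormedModule). intros z _. now apply g_cont.
Qed.

Lemma RInt_zero r a b : 0 < r -> r * (exp 1 - 1) <= a <= b -> RInt (f_r r) a b = 0.
Proof.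
  intros Hr Hab.
  rewrite (RInt_ext _ (fun _ => 0)).
  - rewrite RInt_const. apply (@scal_zero_r R_Ring R_ModuleSpace).
  - intros y Hy. rewrite Rmin_left in Hy by lra. rewrite Rmax_right in Hy by lra.
    unfold f_r, f. destruct (Rle_dec 0 (y / r)); [|lra].
    destruct (Rle_dec (y / r) (exp 1 - 1)); [|lra].
    exfalso. apply (Rmult_le_compat_l r) in r1; [|lra].
    replace (r * (y / r)) with y in r1 by (field; lra). lra.
Qed.

Lemma chasles r a b c : 0 < r -> 0 <= a <= b -> b <= c ->
  RInt (f_r r) a c = RInt (f_r r) a b + RInt (f_r r) b c.
Proof.
  intros Hr H1 H2. rewrite <- (RInt_Chasles (f_r r) a b c).
  - reflexivity.
  - apply exR; lra.
  - apply exR; lra.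
Qed.

Lemma int_eq r x M : 0 < r -> 0 <= x -> Rmax x (r * (exp 1 - 1)) <= M ->
  int_to_infty (f_r r) x = RInt (f_r r) x M.
Proof.
  intros Hr Hx HM.
  set (M0 := Rmax x (r * (exp 1 - 1))) in *.
  assert (H0 : x <= M0) by apply Rmax_l.
  assert (H1 : r * (exp 1 - 1) <= M0) by apply Rmax_r.
  assert (Hc : forall y, M0 <= y -> RInt (f_r r) x y = RInt (f_r r) x M0).
  { intros y Hy. rewrite (chasles r x M0 y) by lra. rewrite (RInt_zero r M0 y) by lra. apply Rplus_0_r. }
  unfold int_to_infty.
  rewrite (Lim_ext_loc (fun _ => RInt (f_r r) x M0)).
  - rewrite Lim_const. simpl. symmetry. apply Hc. lra.
  - exists M0. intros y Hy. symmetry. apply Hc. lra.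
Qed.

Lemma Qdiff r a b : 0 < r -> 0 <= a <= b ->
  Q r a - Q r b = a * f_r r a - b * f_r r b + RInt (f_r r) a b.
Proof.
  intros Hr Hab. unfold Q.
  set (M := Rmax b (r * (exp 1 - 1))).
  assert (b <= M) by apply Rmax_l.
  assert (r * (exp 1 - 1) <= M) by apply Rmax_r.
  rewrite (int_eq r a M) by (try lra; apply Rmax_lub; lra).
  rewrite (int_eq r b M) by (try lra; apply Rmax_lub; lra).
  rewrite (chasles r a b M) by lra. ring.
Qed.

Lemma Qanti r a b : 0 < r -> 0 <= a <= b -> Q r b <= Q r a.
Proof.
  intros Hr Hab. pose proof (Qdiff r a b Hr Hab) as D.
  assert (Hle : RInt (fun _ => f_r r b) a b <= RInt (f_r r) a b).
  { apply RInt_le; try lra.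
    - apply ex_RInt_const.
    - apply exR; lra.
    - intros y Hy. unfold f_r. apply f_anti. split.
      + apply Rdiv_le_0_compat; lra.
      + apply Rmult_le_compat_r; [left; apply Rinv_0_lt_compat; lra | lra]. }
  rewrite RInt_const in Hle. change (scal (b - a) (f_r r b)) with ((b - a) * f_r r b) in Hle.
  assert (f_r r b <= f_r r a).
  { unfold f_r. apply f_anti. split.
    + apply Rdiv_le_0_compat; lra.
    + apply Rmult_le_compat_r; [left; apply Rinv_0_lt_compat; lra | lra]. }
  assert (0 <= a * (f_r r a - f_r r b)) by (apply Rmult_le_pos; lra).
  lra.
Qed.

Lemma Qdrop r x : 0 < r -> 0 <= x -> Q r 0 - Q r x <= x.
Proof.
  intros Hr Hx. rewrite (Qdiff r 0 x) by lra.
  assert (Hle : RInt (f_r r) 0 x <= RInt (fun _ => 1) 0 x).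
  { apply RInt_le; try lra.
    - apply exR; lra.
    - apply ex_RInt_const.
    - intros y Hy. apply f_le1. }
  rewrite RInt_const in Hle. change (scal (x - 0) 1) with ((x - 0) * 1) in Hle.
  assert (0 <= x * f_r r x) by (apply Rmult_le_pos; [lra| apply f_nonneg]).
  lra.
Qed.

Lemma Qscale r l x : 0 < r -> 1 <= l -> 0 <= x -> l * Q r x <= Q (l * r) x.
Proof.
  intros Hr Hl Hx. pose proof e_gt2.
  assert (Hlr : 0 < l * r) by nra.
  set (M := Rmax x (r * (exp 1 - 1))).
  assert (x <= M) by apply Rmax_l.
  assert (r * (exp 1 - 1) <= M) by apply Rmax_r.
  assert (l * (r * (exp 1 - 1)) <= l * M) by (apply Rmult_le_compat_l; lra).
  assert (l * x <= l * M) by (apply Rmult_le_compat_l; lra).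
  assert (Hfr : forall y, f_r (l * r) (l * y + 0) = f_r r y).
  { intros y. unfold f_r. f_equal. field. lra. }
  assert (E : l * Q r x = Q (l * r) (l * x)).
  { unfold Q. rewrite (int_eq r x M) by (try lra; apply Rmax_lub; lra).
    rewrite (int_eq (l * r) (l * x) (l * M)) by (try nra; apply Rmax_lub; lra).
    assert (HI : RInt (fun y => scal l (f_r (l*r) (l*y+0))) x M = l * RInt (f_r r) x M).
    { rewrite (RInt_ext (fun y => scal l (f_r (l*r) (l*y+0))) (fun y => scal l (f_r r y))).
      2: { intros y _. now rewrite Hfr. }
      apply (@RInt_scal R_CompleteNormedModule). apply exR; lra. }
    rewrite (@RInt_comp_lin R_CompleteNormedModule) in HI.
    2: { rewrite !Rplus_0_r. apply exR; nra. }
    rewrite !Rplus_0_r in HI. rewrite HI.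
    pose proof (Hfr x) as HF2. rewrite Rplus_0_r in HF2. rewrite HF2. ring. }
  rewrite E. apply Qanti; nra.
Qed.

Lemma sumR_le m F G : (forall i, (i < m)%nat -> F i <= G i) -> sumR m F <= sumR m G.
Proof.
  induction m; simpl; intros H; [lra|].
  pose proof (H m ltac:(lia)). assert (sumR m F <= sumR m G) by (apply IHm; intros; apply H; lia). lra.
Qed.

Lemma sumR_plus m F G : sumR m (fun i => F i + G i) = sumR m F + sumR m G.
Proof. induction m; simpl; [ring| rewrite IHm; ring]. Qed.

Lemma sumR_scal m l F : sumR m (fun i => l * F i) = l * sumR m F.
Proof. induction m; simpl; [ring| rewrite IHm; ring]. Qed.

Lemma sumR_ind m k a : sumR m (fun i => if Nat.eqb i k then a else 0) = if Nat.ltb k m then a else 0.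
Proof.
  induction m; simpl. reflexivity.
  rewrite IHm. destruct (Nat.ltb_spec k m), (Nat.eqb_spec m k), (Nat.ltb_spec k (S m)); try lia; lra.
Qed.

Lemma cmax_nonneg n c : 0 <= cmax n c.
Proof. induction n; simpl. lra. eapply Rle_trans; [exact IHn| apply Rmax_l]. Qed.

Lemma cmax_ge n c k : (k < n)%nat -> c k <= cmax n c.
Proof.
  induction n; simpl; intros H; [lia|].
  destruct (Nat.eq_dec k n) as [->|]; [apply Rmax_r|].
  eapply Rle_trans; [apply IHn; lia| apply Rmax_l].
Qed.

Theorem lemma10 (n : nat) (u c : nat -> R) (B : R)
  (HB : 0 < B)
  (Hu : forall i, (i < n)%nat -> 0 < u i)
  (Hc : forall i, (i < n)%nat -> 0 <= c i)
  (k : nat) (Hk : (k < n)%nat)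
  (rstar rk : R)
  (Hrstar : is_stopping_rate n u c B rstar)
  (Hrk : is_stopping_rate n u (zero_at c k) B rk) :
  rk >= (1 - cmax n c / B) * rstar.
Proof.
  destruct Hrstar as [Hs [Ts _]]. destruct Hrk as [Hk0 [Tk _]].
  pose proof (cmax_nonneg n c) as Hc0. pose proof (cmax_ge n c k Hk) as Hck.
  set (t := cmax n c / B).
  assert (Ht : cmax n c = t * B) by (unfold t; field; lra).
  assert (0 <= t) by (unfold t; apply Rdiv_le_0_compat; lra).
  destruct (Rle_lt_dec 1 t) as [Ht1|Ht1].
  { assert ((1 - t) * rstar <= 0) by nra. lra. }
  apply Rnot_lt_ge. intros Hlt.
  assert (Hrr : rk <= rstar) by nra.
  set (l := rstar / rk).
  assert (Hl : 1 <= l) by (unfold l; apply (Rmult_le_reg_r rk); [lra|]; field_simplify; lra).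
  assert (Hrs : rstar = l * rk) by (unfold l; field; lra).
  assert (U : total n u (zero_at c k) rstar <= B + c k).
  { assert (Bk : sumR n (fun i => if Nat.eqb i k then c k else 0) = c k).
    { rewrite sumR_ind. destruct (Nat.ltb_spec k n); [reflexivity| lia]. }
    rewrite <- Ts, <- Bk. unfold total. rewrite <- sumR_plus.
    apply sumR_le. intros i Hi. unfold P, zero_at.
    destruct (Nat.eqb_spec i k).
    - subst i. pose proof (Hu k Hi). pose proof (Hc k Hi).
      assert (Hx : 0 <= c k / u k) by (apply Rdiv_le_0_compat; lra).
      pose proof (Qdrop rstar (c k / u k) Hs Hx).
      replace (0 / u k) with 0 by (field; lra).
      assert (u k * (Q rstar 0 - Q rstar (c k / u k)) <= u k * (c k / u k)) by (apply Rmult_le_compat_l; lra).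
      replace (u k * (c k / u k)) with (c k) in * by (field; lra). lra.
    - lra. }
  assert (L : l * B <= total n u (zero_at c k) rstar).
  { rewrite <- Tk. unfold total. rewrite <- sumR_scal. rewrite Hrs.
    apply sumR_le. intros i Hi. unfold P. pose proof (Hu i Hi).
    assert (0 <= zero_at c k i / u i).
    { apply Rdiv_le_0_compat; [|lra]. unfold zero_at. destruct (Nat.eqb i k); [lra| now apply Hc]. }
    pose proof (Qscale rk l (zero_at c k i / u i) Hk0 Hl ltac:(lra)).
    nra. }
  assert (l * B <= B * (1 + t)) by lra.
  assert (rstar * B <= rk * (B * (1 + t))).
  { rewrite Hrs. nra. }
  nra.
Qed.
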